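(* Let $n\ge 4$, $N=\{1,\dots,n\}$, fix distinct $i_1,i_2\in N$ and let $\hat N^c=N\setminus\{i_1,i_2\}$. Then the inequality $$x_{i_2i_1}+\sum_{j\in\hat N^c}\left(x_{i_1j}+x_{ji_1}\right)-\sum_{j\in\hat N^c}x_{i_2j}-\sum_{j,j'\in\hat N^c:\,j\ne j'} x_{jj'}\le 2-\frac{(n-3)(n-4)}{2}$$ is a valid inequality for the weak order polytope $P^n_{WO}$, i.e. it holds for every point $x\in P^n_{WO}$.
   Context: Let $N=\{1,\dots,n\}$ and $A_N=\{(i,j): i,j\in N, i\ne j\}$. A weak order on $N$ is a binary relation $W\subseteq N\times N$ that is reflexive, transitive and total; $(i,j)\in W$ is read ''$i$ is preferred over or tied with $j$''. The characteristic vector of $W$ is $x^W\in\{0,1\}^{A_N}$ with $x^W_{(i,j)}=1$ if $(i,j)\in W$ and $0$ otherwise. The weak order polytope $P^n_{WO}$ is the convex hull of the characteristic vectors of all weak orders on $N$; its points are vectors $x\in\mathbb{R}^{A_N}$ and $x_{ij}$ denotes the coordinate $x_{(i,j)}$. *)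

(* Defs.v *)
(* Points of R^{A_N} are represented as functions
   x : 'I_n -> 'I_n -> R; only off-diagonal values (i != j) are coordinates. *)
From mathcomp Require Import all_boot all_order all_algebra.
Set Implicit Arguments. Unset Strict Implicit. Unset Printing Implicit Defensive.
Import Order.TTheory GRing.Theory Num.Theory.
Local Open Scope ring_scope.

Definition weak_order (n : nat) (W : rel 'I_n) : Prop :=
  reflexive W /\ transitive W /\ total W.

Definition char_vec (R : pzRingType) (n : nat) (W : rel 'I_n) : 'I_n -> 'I_n -> R :=
  fun i j => (W i j)%:R.

Definition in_weak_order_polytope (R : realFieldType) (n : nat)
    (x : 'I_n -> 'I_n -> R) : Prop :=
  exists (k : nat) (W : 'I_k -> rel 'I_n) (lam : 'I_k -> R),
    [/\ forall t, weak_order (W t),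
        forall t, 0 <= lam t,
        \sum_(t < k) lam t = 1 &
        forall i j : 'I_n, i != j ->
          x i j = \sum_(t < k) lam t * char_vec R (W t) i j].

(* Main.v *)
Require Import Defs.
From mathcomp Require Import all_boot all_order all_algebra.
From mathcomp Require Import zify ring lra.
Import Order.TTheory GRing.Theory Num.Theory.
Local Open Scope ring_scope.

Lemma nat_quad (R : realFieldType) (k : nat) :
  0 <= (k%:R - 1) * (k%:R - 2) :> R /\ 0 <= k%:R * (k%:R - 1) :> R.
Proof.
case: k => [|[|k]]; first by split; lra.
  by split; lra.
have h : 2 <= k.+2%:R :> R by rewrite (ler_nat R 2).
split; nra.
Qed.

Lemma perW (R : realFieldType) n (i1 i2 : 'I_n) (W : rel 'I_n) :
  (4 <= n)%N -> i1 != i2 -> weak_order W -> forall Nc : {set 'I_n},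
  Nc = [set j : 'I_n | (j != i1) && (j != i2)] ->
  char_vec R W i2 i1 + \sum_(j in Nc) (char_vec R W i1 j + char_vec R W j i1)
    - \sum_(j in Nc) char_vec R W i2 j
    - \sum_(j in Nc) \sum_(j' in Nc | j' != j) char_vec R W j j'
  <= 2 - ((n - 3) * (n - 4))%:R / 2.
Proof.
move=> n4 i12 [Wr [Wt Wtot]] Nc NcE.
set b := char_vec R W.
have bE : forall i j, b i j = (W i j)%:R by [].
pose e j : R := ((W i1 j) && (W j i1))%:R.
pose E := \sum_(j in Nc) e j.
pose m : R := #|Nc|%:R.
pose Q := \sum_(j in Nc) \sum_(j' in Nc) b j j'.
have cardNc : #|Nc| = (n - 2)%N.
  rewrite NcE; have -> : [set j : 'I_n | (j != i1) && (j != i2)] = ~: [set i1; i2].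
    by apply/setP => j; rewrite !inE negb_or.
  have := cardsC [set i1; i2]; rewrite cards2 i12 card_ord /=; move: (#|~: [set i1; i2]|) => a; lia.
have F1 : \sum_(j in Nc) \sum_(j' in Nc | j' != j) b j j' = Q - m.
  rewrite /Q /m -sumr_const -sumrB; apply: eq_bigr => j jN.
  have bjj : b j j = 1 by rewrite /b /char_vec Wr.
  rewrite [in RHS](bigD1 j) //= bjj; lra.
have F2 : m * m + m + E * E - E <= 2 * Q.
  have -> : 2 * Q = \sum_(j in Nc) \sum_(j' in Nc) (b j j' + b j' j).
    rewrite mulr2n mulrDl mul1r. 
    rewrite {2}/Q exchange_big /= /Q -big_split /=.
    by apply: eq_bigr => j _; rewrite -big_split.
  apply: le_trans (_ : \sum_(j in Nc) \sum_(j' in Nc)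
     (1 + e j * e j' + (j == j')%:R * (1 - e j)) <= _).
    have inner : forall j, j \in Nc -> \sum_(j' in Nc)
        (1 + e j * e j' + (j == j')%:R * (1 - e j)) = m + e j * E + (1 - e j).
      move=> j jN; rewrite !big_split /= sumr_const -mulr_sumr [X in _ + X = _](bigD1 j) //= eqxx.
      rewrite [X in _ + (_ + X)]big1; last by move=> j0 /andP[_ ne]; rewrite eq_sym (negbTE ne) mul0r.
      rewrite mul1r addr0 /m /E; lra.
    rewrite (eq_bigr _ inner) !big_split /= sumr_const -mulr_suml sumrN sumr_const -/E.
    have -> : m *+ #|Nc| = m * m by rewrite /m mulr_natr.
    rewrite /m /E; lra.
  apply: ler_sum => j _; apply: ler_sum => j' _.
  rewrite !bE /e.
  case: eqP => [<-|ne].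
    by rewrite Wr; case: (W i1 j); case: (W j i1) => /=; lra.
  have h1 : W i1 j -> W j' i1 -> W j' j by move=> a c; apply: Wt c a.
  have h2 : W j i1 -> W i1 j' -> W j j' by move=> a c; apply: Wt a c.
  have := Wtot j j'.
  move: h1 h2; case: (W j j'); case: (W j' j); case: (W i1 j); case: (W j i1);
    case: (W i1 j'); case: (W j' i1) => //= h1 h2 _; try lra;
    try (by have := h1 isT isT); try (by have := h2 isT isT).
have F3 : \sum_(j in Nc) (b i1 j + b j i1) - \sum_(j in Nc) b i2 j
    <= m + E - b i2 i1 * E.
  rewrite -sumrB.
  apply: le_trans (_ : \sum_(j in Nc) (1 + e j - b i2 i1 * e j) <= _).
    apply: ler_sum => j _; rewrite !bE /e.
    have h : W i2 i1 -> W i1 j -> W i2 j by move=> a c; apply: Wt a c.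
    move: h; case: (W i2 i1); case: (W i1 j); case: (W j i1); case: (W i2 j) => //= h;
      try lra; by have := h isT isT.
  by rewrite sumrB big_split /= sumr_const -mulr_sumr /m /E.
have EN : E = (\sum_(j in Nc) ((W i1 j) && (W j i1) : nat))%:R.
  by rewrite natr_sum.
have [Q1 Q2] := nat_quad R (\sum_(j in Nc) ((W i1 j) && (W j i1) : nat)).
rewrite -EN in Q1 Q2.
have key : b i2 i1 * (1 - E) + (3 * E - E * E) / 2 <= 1.
  rewrite bE; case: (W i2 i1) => /=; lra.
have cE : ((n - 3) * (n - 4))%:R / 2 = (m - 1) * (m - 2) / 2 :> R.
  rewrite /m cardNc.
  have -> : (n - 3 = (n - 4) + 1)%N by lia.
  have -> : (n - 2 = (n - 4) + 2)%N by lia.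
  rewrite natrM !natrD; move: (n - 4)%N => k; lra.
rewrite cE F1; move: F1 F2 F3 key.
rewrite /m /E /Q => F1 F2 F3 key.
nra.
Qed.

Lemma sum_swap (R : realFieldType) n k (P : pred 'I_n) (lam : 'I_k -> R)
  (F : 'I_n -> 'I_k -> R) :
  \sum_(j | P j) \sum_(t < k) lam t * F j t = \sum_(t < k) lam t * \sum_(j | P j) F j t.
Proof. by rewrite exchange_big; apply: eq_bigr => t _; rewrite mulr_sumr. Qed.

Theorem mainTheorem4 (R : realFieldType) (n : nat) (i1 i2 : 'I_n)
    (x : 'I_n -> 'I_n -> R) :
  (4 <= n)%N -> i1 != i2 -> in_weak_order_polytope x ->
  let Nc := [set j : 'I_n | (j != i1) && (j != i2)] in
  x i2 i1 + \sum_(j in Nc) (x i1 j + x j i1)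
    - \sum_(j in Nc) x i2 j
    - \sum_(j in Nc) \sum_(j' in Nc | j' != j) x j j'
  <= 2 - ((n - 3) * (n - 4))%:R / 2.
Proof.
move=> n4 i12 [k [W [lam [Wo lam0 lam1 xE]]]].
cbv zeta.
set Nc := [set j : 'I_n | _].
pose c t := char_vec R (W t).
have X1 : x i2 i1 = \sum_(t < k) lam t * c t i2 i1 by apply: xE; rewrite eq_sym.
have XA : \sum_(j in Nc) (x i1 j + x j i1) =
    \sum_(t < k) lam t * \sum_(j in Nc) (c t i1 j + c t j i1).
  rewrite -sum_swap; apply: eq_bigr => j; rewrite inE => /andP[h1 h2].
  rewrite (xE i1 j) 1?eq_sym // (xE j i1) // -big_split /=.
  by apply: eq_bigr => t _; rewrite mulrDr.
have XB : \sum_(j in Nc) x i2 j = \sum_(t < k) lam t * \sum_(j in Nc) c t i2 j.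
  rewrite -sum_swap; apply: eq_bigr => j; rewrite inE => /andP[h1 h2].
  by rewrite (xE i2 j) 1?eq_sym.
have XC : \sum_(j in Nc) \sum_(j' in Nc | j' != j) x j j' =
    \sum_(t < k) lam t * \sum_(j in Nc) \sum_(j' in Nc | j' != j) c t j j'.
  rewrite -sum_swap; apply: eq_bigr => j _; rewrite -sum_swap.
  by apply: eq_bigr => j' /andP[_ ne]; rewrite xE // eq_sym.
rewrite X1 XA XB XC -big_split /= -!sumrB.
have -> : 2 - ((n - 3) * (n - 4))%:R / 2 =
   \sum_(t < k) lam t * (2 - ((n - 3) * (n - 4))%:R / 2) :> R.
  by rewrite -mulr_suml lam1 mul1r.
apply: ler_sum => t _.
have := @perW R n i1 i2 (W t) n4 i12 (Wo t) Nc erefl.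
have := lam0 t.
rewrite /c; move: (char_vec R (W t)) => y.
set S1 := \sum_(j in Nc) _; set S2 := \sum_(j in Nc) _; set S3 := \sum_(j in Nc) _.
move: (y i2 i1) (2 - _) => a r.
nra.
Qed.
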